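(* Let $n\ge 2$, let $d$ be prime, and let $f:\mathbb{Z}_{c_1}\times\cdots\times\mathbb{Z}_{c_n}\to\mathbb{Z}_d$ be a function that is not bipartite linear. Then the only non-signalling distribution $p(\mathbf{m}|\mathbf{s})$ (with $m_j\in\mathbb{Z}_d$) whose correlator is the deterministic correlator $p(k|\mathbf{s})=\delta^k_{f(\mathbf{s})}$ is $$p(\mathbf{m}|\mathbf{s})=\begin{cases} d^{1-n} & \text{if } [\sum_{j=1}^n m_j]_d=f(\mathbf{s}),\\ 0&\text{otherwise.}\end{cases}$$
   Context: Correlator: $p(k|\mathbf{s})=\sum_{\mathbf{m}:[\sum_j m_j]_d=k}p(\mathbf{m}|\mathbf{s})$, with $[\cdot]_d$ reduction mod $d$. Non-signalling: for every subset $\mathcal{J}\subseteq\{1,\dots,n\}$ and inputs $\mathbf{s},\mathbf{s}'$ that agree on all coordinates outside $\mathcal{J}$, $\sum_{(m_j)_{j\in\mathcal{J}}}p(\mathbf{m}|\mathbf{s})=\sum_{(m_j)_{j\in\mathcal{J}}}p(\mathbf{m}|\mathbf{s}')$. A function $f$ is bipartite linear if there exist a nonempty proper subset $\mathcal{J}\subset\{1,\dots,n\}$ with complement $\mathcal{J}^c$ and functions $f^1$ of $(s_j)_{j\in\mathcal{J}}$ and $f^2$ of $(s_j)_{j\in\mathcal{J}^c}$, both valued in $\mathbb{Z}_d$, with $f(\mathbf{s})=[f^1((s_j)_{j\in\mathcal{J}})+f^2((s_j)_{j\in\mathcal{J}^c})]_d$. *)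

(* Defs.v *)
From HB Require Import structures.
From mathcomp Require Import all_boot all_order all_algebra.
Set Implicit Arguments. Unset Strict Implicit. Unset Printing Implicit Defensive.
Import Order.TTheory GRing.Theory Num.Theory.

Definition inputs (n : nat) (c : 'I_n -> nat) : finType :=
  {dffun forall j : 'I_n, 'I_(c j)}.

Definition outputs (n d : nat) : finType := {ffun 'I_n -> 'I_d}.

Definition sum_mod (n d : nat) (m : outputs n d) : nat := (\sum_(j < n) (m j : nat)) %% d.

Local Open Scope ring_scope.

Definition is_distribution (R : realFieldType) n d (c : 'I_n -> nat)
  (p : inputs c -> outputs n d -> R) : Prop :=
  (forall s m, 0 <= p s m) /\ (forall s, \sum_(m : outputs n d) p s m = 1).

Definition non_signalling (R : realFieldType) n d (c : 'I_n -> nat)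
  (p : inputs c -> outputs n d -> R) : Prop :=
  forall (J : {set 'I_n}) (s s' : inputs c),
    (forall j, j \notin J -> s j = s' j) ->
    forall m0 : outputs n d,
      \sum_(m : outputs n d | [forall j, (j \notin J) ==> (m j == m0 j)]) p s m =
      \sum_(m : outputs n d | [forall j, (j \notin J) ==> (m j == m0 j)]) p s' m.

Definition correlator (R : realFieldType) n d (c : 'I_n -> nat)
  (p : inputs c -> outputs n d -> R) (s : inputs c) (k : nat) : R :=
  \sum_(m : outputs n d | sum_mod m == k) p s m.

Definition depends_only_on n (c : 'I_n -> nat) (T : Type)
  (J : {set 'I_n}) (g : inputs c -> T) : Prop :=
  forall s s' : inputs c, (forall j, j \in J -> s j = s' j) -> g s = g s'.

Definition bipartite_linear n d (c : 'I_n -> nat) (f : inputs c -> 'I_d) : Prop :=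
  exists J : {set 'I_n}, [/\ J != set0, J != setT &
    exists f1 f2 : inputs c -> 'I_d,
      [/\ depends_only_on J f1, depends_only_on (~: J) f2 &
          forall s, (f s : nat) = (((f1 s : nat) + (f2 s : nat)) %% d)%N]].

(* Main.v *)
Require Import Defs.
From HB Require Import structures.
From mathcomp Require Import all_boot all_order all_algebra ring zify.
From Stdlib Require Import Classical.
Import Order.TTheory GRing.Theory Num.Theory.
Local Open Scope ring_scope.

Lemma natmodz (d x y : nat) : (x == y %[mod d])%N = (d %| `|(x%:Z - y%:Z)%R|)%N.
Proof. have := dvdzE d (x%:Z - y%:Z)%R. simpl. move=> <-. rewrite -eqz_mod_dvd !modz_nat. by rewrite eqz_nat. Qed.
Lemma shift_const (R : realFieldType) (d e : nat) (h : nat -> R) : prime d ->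
  ~~ (d %| e)%N -> (forall k, h k = h (k %% d)%N) -> (forall k, h (k + e)%N = h k) ->
  forall k, h k = h 0%N.
Proof.
move=> dP nde hmod hinv.
have iter j k : h (k + j * e)%N = h k.
  elim: j => [|j IH]; first by rewrite mul0n addn0.
  by rewrite mulSn addnA addnAC hinv IH.
have cop : coprime d e by rewrite prime_coprime.
have [x _ Hx] := Bezoutl e (prime_gt0 dP).
rewrite (eqP cop) in Hx.
move=> k; rewrite -(iter (k * x)%N k) hmod.
have -> : (k + k * x * e = k * (1 + x * e))%N by rewrite mulnDr muln1 mulnA.
by rewrite (eqP (dvdn_mull _ Hx)).
Qed.

Lemma cancel_mod (d a b P Q : nat) : prime d ->
  (a * Q + b * P == a * P + b * Q %[mod d])%N -> ~~ (a == b %[mod d])%N ->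
  (P == Q %[mod d])%N.
Proof.
move=> dP; rewrite !natmodz => H Hab.
have E : ((a * Q + b * P)%N%:Z - (a * P + b * Q)%N%:Z = (a%:Z - b%:Z) * (Q%:Z - P%:Z))%R.
  by rewrite !PoszD !PoszM; ring.
move: H; rewrite E abszM Euclid_dvdM // (negbTE Hab) /=.
by rewrite -opprB abszN.
Qed.

Set Implicit Arguments. Unset Strict Implicit.

Section Main.
Variables (R : realFieldType) (n d : nat) (c : 'I_n -> nat)
  (f : inputs c -> 'I_d) (p : inputs c -> outputs n d -> R).
Hypothesis dP : prime d.
Hypothesis pD : is_distribution p.
Hypothesis pNS : non_signalling p.
Hypothesis pC : forall s k, correlator p s k = (k == (f s : nat))%:R.

Lemma d_gt0 : (0 < d)%N. Proof. exact: prime_gt0. Qed.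

Lemma supp0 s m : sum_mod m != f s -> p s m = 0.
Proof.
have [p0 p1] := pD.
have H : \sum_(m | sum_mod m != f s) p s m = 0.
  have := p1 s; rewrite (bigID (fun m => sum_mod m == f s)) /=.
  have := pC s (f s); rewrite /correlator eqxx => ->.
  by move=> /eqP; rewrite -{2}[1]addr0 => /eqP /addrI.
by move=> Hm; exact: (psumr_eq0P (fun i _ => p0 s i) H Hm).
Qed.

Definition lin (t : 'I_n -> nat) (m : outputs n d) : nat :=
  ((\sum_(j < n) t j * m j) %% d)%N.
Definition D t s (k : nat) : R := \sum_(m : outputs n d | lin t m == (k %% d)%N) p s m.

Lemma Dmod t s k : D t s k = D t s (k %% d)%N.
Proof. by rewrite /D modn_mod. Qed.

Lemma D_shift t t' a s : (forall j, t' j = t j + a)%N ->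
  forall k, D t' s (k + a * f s)%N = D t s k.
Proof.
move=> Ht k; rewrite /D !(big_mkcond (fun m => lin _ m == _)) /=.
apply: eq_bigr => m _.
case: (eqVneq (sum_mod m) (f s)) => Hm; last by rewrite supp0 // !if_same.
congr (if _ then _ else _).
rewrite /lin.
have -> : (\sum_j t' j * m j = \sum_j t j * m j + a * \sum_(j < n) (m j : nat))%N.
  under eq_bigr do rewrite Ht mulnDl.
  by rewrite big_split /= big_distrr.
rewrite -modnDmr -modnMmr.
move: Hm; rewrite /sum_mod => ->.
by rewrite modnDmr eqn_modDr.
Qed.

Lemma D_sum t s : \sum_(k < d) D t s k = 1.
Proof.
have [_ p1] := pD.
rewrite -(p1 s) /D.
rewrite (exchange_big_dep xpredT) //=.
apply: eq_bigr => m _.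
have ltl : (lin t m < d)%N by rewrite ltn_pmod // d_gt0.
rewrite (big_pred1 (Ordinal ltl)) // => k /=.
rewrite /= modn_small; last by [].
apply/eqP/eqP => [H|->]; last by [].
by apply: val_inj; rewrite /= H.
Qed.

Lemma D_ns t (s s' : inputs c) : (forall j, (t j %% d != 0)%N -> s j = s' j) ->
  forall k, D t s k = D t s' k.
Proof.
move=> Hss' k.
pose K := [set j | (t j %% d != 0)%N].
have H1 : forall j, j \notin ~: K -> s j = s' j.
  by move=> j; rewrite inE negbK inE; exact: Hss'.
have NS := pNS H1.
pose z0 : 'I_d := Ordinal d_gt0.
pose proj (m : outputs n d) : outputs n d := [ffun j => if j \in K then m j else z0].
have projK m : proj (proj m) = proj m.
  by apply/ffunP => j; rewrite !ffunE; case: (j \in K).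
have linproj m : lin t m = lin t (proj m).
  rewrite /lin -[in LHS]modn_summ -[in RHS]modn_summ; congr (_ %% _)%N.
  apply: eq_bigr => j _; rewrite ffunE.
  case: ifP => // /negbT; rewrite inE negbK => /eqP Hj.
  by rewrite -modnMml Hj mul0n -[in RHS]modnMml Hj mul0n.
have marg (s1 : inputs c) : D t s1 k = \sum_(m0 : outputs n d | proj m0 == m0)
   ((lin t m0 == (k %% d)%N)%:R * \sum_(m : outputs n d | [forall j, (j \notin ~: K) ==> (m j == m0 j)]) p s1 m).
  rewrite /D.
  transitivity (\sum_(m0 : outputs n d) (lin t m0 == (k %% d)%N)%:R * \sum_(m : outputs n d | m0 == proj m) p s1 m).
    under [RHS]eq_bigr do rewrite big_distrr /=.
    rewrite (exchange_big_dep xpredT) //= big_mkcond /=.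
    apply: eq_bigr => m _.
    rewrite (big_pred1 (proj m)); last by move=> m0; rewrite /= eq_sym.
    by rewrite -linproj; case: ifP; rewrite ?mul1r ?mul0r.
  rewrite [LHS](bigID (fun m0 => proj m0 == m0)) /= [X in _ + X]big1 ?addr0.
    apply: eq_bigr => m0 /eqP Hm0; congr (_ * _).
    apply: eq_bigl => m; apply/eqP/forallP => [-> j|H].
      by apply/implyP; rewrite in_setC negbK => Hj; rewrite ffunE Hj.
    rewrite -Hm0; apply/ffunP => j; rewrite !ffunE.
    case: ifP => Hj //; by have := H j; rewrite in_setC negbK Hj /= => /eqP.
  move=> m0 Hm0; rewrite big_pred0 ?mulr0 // => m.
  by apply/negP => /eqP E; move: Hm0; rewrite E projK eqxx.
rewrite !marg; apply: eq_bigr => m0 _; by rewrite NS.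
Qed.

Definition M (J : {set 'I_n}) (x y : inputs c) : inputs c :=
  finfun (fun j => if j \in J then x j else y j).

Lemma ME J x y j : M J x y j = if j \in J then x j else y j.
Proof. by rewrite /M ffunE. Qed.

Lemma coord_ind (Q : inputs c -> Prop) :
  (forall (x y : inputs c) (j : 'I_n), (forall i, i != j -> x i = y i) -> Q x -> Q y) ->
  forall x y, Q x -> Q y.
Proof.
move=> step x y Qx.
pose z i := M [set j : 'I_n | (j < i)%N] y x.
have: forall i, (i <= n)%N -> Q (z i).
  elim=> [_|i IH Hi].
    suff -> : z 0%N = x by [].
    by apply/ffunP => j; rewrite ME inE.
  apply: (step (z i) _ (Ordinal Hi)); last exact: IH (ltnW Hi).
  move=> j Hj; rewrite !ME !inE [in RHS]ltnS [in RHS]leq_eqVlt.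
  have -> : (nat_of_ord j == i) = false.
    by apply/negbTE; apply: contra Hj => /eqP E; apply/eqP/val_inj.
  by [].
move=> /(_ n (leqnn n)).
suff -> : z n = y by [].
by apply/ffunP => j; rewrite ME inE ltn_ord.
Qed.

Definition unif (h : nat -> R) := forall k, h k = h 0%N.
Definition modinv (h : nat -> R) := forall k, h k = h (k %% d)%N.
Definition Rel (h h' : nat -> R) u v := forall k, h (k + u)%N = h' (k + v)%N.

Lemma clsE u : ((u + (d - u %% d)) %% d = 0)%N.
Proof.
rewrite -modnDml subnKC ?modnn //.
by apply: ltnW; rewrite ltn_pmod // d_gt0.
Qed.

Lemma modfix u k : ((k + (d - u %% d) + u) %% d = k %% d)%N.
Proof. by rewrite -addnA (addnC _ u) -modnDmr clsE addn0. Qed.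

Lemma cls_eq u w : ((u + (d - w %% d)) %% d == 0)%N = (u == w %[mod d]).
Proof. by rewrite -(eqn_modDr (d - w %% d)) clsE. Qed.

Lemma Rel_unif h h' u v : modinv h -> modinv h' -> Rel h h' u v -> unif h' -> unif h.
Proof.
move=> hm hm' Hr Uh'.
have E k : h k = h' 0%N.
  by rewrite hm -(modfix u) -hm Hr Uh'.
by move=> k; rewrite !E.
Qed.

Lemma RelC h h' u v : Rel h h' u v -> Rel h' h v u.
Proof. by move=> H k; rewrite H. Qed.

Lemma RelT h1 h2 h3 u v u' v' : Rel h1 h2 u v -> Rel h2 h3 u' v' ->
  Rel h1 h3 (u + u') (v + v').
Proof.
move=> H1 H2 k.
by rewrite addnA addnAC H1 addnAC H2 addnA.
Qed.

Lemma Rel_shift X T Y T' u v : Rel X T u 0 -> Rel Y T' v 0 -> X =1 Y -> Rel T T' v u.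
Proof.
move=> H1 H2 E k.
by rewrite -[(k + v)%N]addn0 -H1 E addnAC H2 addn0.
Qed.

Lemma Stab h U V : modinv h -> ~ unif h -> Rel h h U V -> (U %% d = V %% d)%N.
Proof.
move=> hm nU Hr; case: (eqVneq (U %% d)%N (V %% d)%N) => // nUV; exfalso; apply: nU.
apply: (@shift_const R d (d - U %% d + V)) => //.
- apply/negP => /dvdnP [q Hq].
  have H : ((U + (d - U %% d + V)) %% d = V %% d)%N.
    by rewrite addnA -modnDml clsE add0n.
  by move: nUV; rewrite -H -modnDmr Hq modnMl addn0 eqxx.
- by move=> k; rewrite addnA -Hr hm modfix -hm.
Qed.

Lemma D_Rel t t' a s : (forall j, t' j = t j + a)%N -> Rel (D t' s) (D t s) (a * f s) 0.
Proof. by move=> Ht k; rewrite addn0 (D_shift _ Ht). Qed.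

Lemma Dmodinv t s : modinv (D t s).
Proof. by move=> k; rewrite Dmod. Qed.

Lemma unif_transfer t (x y : inputs c) : unif (D t x) -> unif (D t y).
Proof.
move: x y; apply: (coord_ind (Q := fun z => unif (D t z))).
move=> x y j Hxy Ux.
pose a := (d - t j %% d)%N.
pose t' := fun i => (t i + a)%N.
have Eq : D t' y =1 D t' x.
  apply: D_ns => i Hi; symmetry; apply: Hxy.
  by apply: contra Hi => /eqP ->; rewrite /t' /a clsE.
have R1 := D_Rel x (fun i => erefl (t' i)).
have R2 := D_Rel y (fun i => erefl (t' i)).
exact: (Rel_unif (Dmodinv _ _) (Dmodinv _ _) (Rel_shift R2 R1 Eq) Ux).
Qed.

Lemma MD t i0 (s1 s2 s3 s4 : inputs c) j :
  (forall s, ~ unif (D t s)) ->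
  (forall i, ~~ (t i == t i0 %[mod d]) -> s1 i = s2 i) ->
  (forall i, ~~ (t i == t i0 %[mod d]) -> s3 i = s4 i) ->
  (forall i, i != j -> s1 i = s3 i) -> (forall i, i != j -> s2 i = s4 i) ->
  ~~ (t j == t i0 %[mod d]) ->
  (f s1 + f s4 == f s2 + f s3 %[mod d]).
Proof.
move=> NU H12 H34 H13 H24 Hj.
pose a := (d - t i0 %% d)%N; pose b := (d - t j %% d)%N.
pose ta := fun i => (t i + a)%N; pose tb := fun i => (t i + b)%N.
have A12 : D ta s1 =1 D ta s2.
  by apply: D_ns => i; rewrite /ta /a cls_eq; exact: H12.
have A34 : D ta s3 =1 D ta s4.
  by apply: D_ns => i; rewrite /ta /a cls_eq; exact: H34.
have B13 : D tb s1 =1 D tb s3.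
  apply: D_ns => i; rewrite /tb /b cls_eq => Hi; apply: H13.
  by apply: contra Hi => /eqP ->.
have B24 : D tb s2 =1 D tb s4.
  apply: D_ns => i; rewrite /tb /b cls_eq => Hi; apply: H24.
  by apply: contra Hi => /eqP ->.
have RA s := D_Rel s (fun i => erefl (ta i)).
have RB s := D_Rel s (fun i => erefl (tb i)).
have R12 := Rel_shift (RA s1) (RA s2) A12.
have R13 := Rel_shift (RB s1) (RB s3) B13.
have R34 := Rel_shift (RA s3) (RA s4) A34.
have R24 := Rel_shift (RB s2) (RB s4) B24.
have L := RelT (RelC (RelT R13 R34)) (RelT R12 R24).
have := Stab (@Dmodinv _ _) (NU s4) L.
move=> /eqP HS.
apply: (@cancel_mod d a b); first exact: dP.
  move: HS.
  have -> : (b * f s1 + a * f s3 + (a * f s2 + b * f s4) = a * (f s2 + f s3) + b * (f s1 + f s4))%N by ring.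
  by have -> : (b * f s3 + a * f s4 + (a * f s1 + b * f s2) = a * (f s1 + f s4) + b * (f s2 + f s3))%N by ring.
apply: contra Hj => Hab.
rewrite -cls_eq -/a.
have : (t j + a == t j + b %[mod d]) by rewrite eqn_modDl.
by rewrite /b clsE => /eqP ->.
Qed.

Lemma decomp t i0 i1 (s0 : inputs c) : ~~ (t i1 == t i0 %[mod d]) ->
  (forall s, ~ unif (D t s)) -> bipartite_linear f.
Proof.
move=> H10 NU.
pose J := [set i | t i == t i0 %[mod d]].
have Cl : forall x x' y y', (f (M J x y) + f (M J x' y') == f (M J x' y) + f (M J x y') %[mod d]).
  move=> x x' y y'.
  have base : (f (M J x y) + f (M J x' y) == f (M J x' y) + f (M J x y) %[mod d]).
    by rewrite addnC.
  move: y' base; apply: (coord_ind (Q := fun z =>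
     (f (M J x y) + f (M J x' z) == f (M J x' y) + f (M J x z) %[mod d]))).
  move=> z z' j Hzz' Qz.
  case Hj : (j \in J).
    have E w : M J w z = M J w z'.
      apply/ffunP => i; rewrite !ME; case: ifP => // Hi; apply: Hzz'.
      by apply/eqP => E; move: Hi; rewrite E Hj.
    by rewrite -!E.
  have MDr := @MD t i0 (M J x z) (M J x' z) (M J x z') (M J x' z') j NU.
  have {}MDr : (f (M J x z) + f (M J x' z') == f (M J x' z) + f (M J x z') %[mod d]).
    apply: MDr.
    - by move=> i Hi; rewrite !ME inE (negbTE Hi).
    - by move=> i Hi; rewrite !ME inE (negbTE Hi).
    - by move=> i Hi; rewrite !ME; case: ifP => //; rewrite Hzz'.
    - by move=> i Hi; rewrite !ME; case: ifP => //; rewrite Hzz'.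
    - by move: Hj; rewrite inE => ->.
  rewrite -(eqn_modDr (f (M J x z) + f (M J x' z))).
  set al := (f (M J x y) : nat); set be := (f (M J x' y) : nat).
  set f1 := (f (M J x z) : nat); set f2 := (f (M J x' z) : nat).
  set f3 := (f (M J x z') : nat); set f4 := (f (M J x' z') : nat).
  have -> : (al + f4 + (f1 + f2) = (al + f2) + (f1 + f4))%N by ring.
  have -> : (be + f3 + (f1 + f2) = (be + f1) + (f2 + f3))%N by ring.
  by apply/eqP; rewrite -modnDm (eqP Qz) (eqP MDr) modnDm.
have Ms w : M J w w = w by apply/ffunP => i; rewrite ME if_same.
exists J; split.
- by apply/set0Pn; exists i0; rewrite inE.
- apply/negP => /eqP E; have : i1 \in J by rewrite E inE.
  by rewrite inE (negbTE H10).
pose f2 s := f (M J s0 s).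
pose f1 s : 'I_d := Ordinal (ltn_pmod (f (M J s s0) + (d - f s0)) d_gt0).
exists f1, f2; split.
- move=> s s' Hs; apply: val_inj => /=; congr ((nat_of_ord (f _) + _) %% d)%N.
  by apply/ffunP => i; rewrite !ME; case: ifP => // /Hs.
- move=> s s' Hs; rewrite /f2; congr (f _).
  apply/ffunP => i; rewrite !ME; case: ifP => // Hi; apply: Hs.
  by rewrite inE Hi.
move=> s; rewrite /= modnDml.
apply/eqP; rewrite -[X in X == _](modn_small (ltn_ord (f s))).
change (f s == f (M J s s0) + (d - f s0) + f2 s %[mod d]).
rewrite -(eqn_modDr (f s0)).
have -> : (f (M J s s0) + (d - f s0) + f2 s + f s0 = (f2 s + f (M J s s0)) + d)%N.
  by have := ltn_ord (f s0); lia.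
by rewrite modnDr; have := Cl s s0 s s0; rewrite !Ms.
Qed.

Lemma all_unif t i0 i1 : ~ bipartite_linear f -> ~~ (t i1 == t i0 %[mod d]) ->
  forall s, unif (D t s).
Proof.
move=> nBL H10 s; case: (classic (unif (D t s))) => // nU; exfalso; apply: nBL.
apply: (decomp s H10) => s' Us'; apply: nU; exact: unif_transfer Us'.
Qed.

Lemma dR_neq0 : (d%:R : R) != 0.
Proof. by rewrite pnatr_eq0 -lt0n d_gt0. Qed.

Lemma unif_val t s : unif (D t s) -> forall k, D t s k = d%:R^-1.
Proof.
move=> U k; have := D_sum t s.
under eq_bigr do rewrite U.
rewrite sumr_const card_ord => H.
by rewrite U; apply: (mulIf dR_neq0); rewrite mulr_natr H mulVf // dR_neq0.
Qed.

Lemma D_const t a s : (forall j, t j = a) -> D t s (a * f s) = 1.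
Proof.
move=> Ht.
have := D_shift (t := fun _ => 0%N) (t' := t) (a := a) s (fun j => Ht j) 0.
rewrite add0n => ->.
have [_ p1] := pD; rewrite -(p1 s) /D.
apply: eq_bigl => m; rewrite /lin mod0n.
by rewrite big1 ?mod0n // => j _; rewrite mul0n.
Qed.

Lemma linmod t m : (lin t m %% d = lin t m)%N.
Proof. by rewrite /lin modn_mod. Qed.

Lemma sum_indic (I : finType) (b : I) : \sum_(a : I) ((a == b)%:R : R) = 1.
Proof. by rewrite (bigD1 b) //= eqxx big1 ?addr0 // => a /negbTE ->. Qed.

Lemma count_N (m ms : outputs n d) : m != ms ->
  \sum_(t : outputs n d) ((lin (fun j => t j) m == lin (fun j => t j) ms)%:R : R)
    = (d%:R) ^+ n / d%:R.
Proof.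
move=> Hne.
have [j0 Hj0] : exists j0, m j0 != ms j0.
  have : [exists j, m j != ms j].
    rewrite -negb_forall; apply: contra Hne => /forallP H.
    by apply/eqP/ffunP => j; apply/eqP/H.
  by case/existsP => j Hj; exists j.
pose A (v t : outputs n d) := (\sum_(j < n) t j * v j)%N.
pose L t := ((A m t + d.-1 * A ms t) %% d)%N.
have key (t : outputs n d) : (lin (fun j => t j) m == lin (fun j => t j) ms) = (L t == 0%N).
  rewrite /lin /L -/(A m t) -/(A ms t).
  rewrite -(eqn_modDr (d.-1 * A ms t)).
  have -> : (A ms t + d.-1 * A ms t = d * A ms t)%N.
    by rewrite -mulSn prednK ?d_gt0.
  by rewrite modnMr.
pose phi (t : outputs n d) : outputs n d :=
  [ffun j => if j == j0 then Ordinal (ltn_pmod (t j + 1) d_gt0) else t j].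
have linphi (v t : outputs n d) : (A v (phi t) %% d = (A v t + v j0) %% d)%N.
  rewrite /A (bigD1 j0) // [in RHS](bigD1 j0) //= ffunE eqxx /=.
  have -> : (\sum_(i < n | i != j0) phi t i * v i = \sum_(i < n | i != j0) t i * v i)%N.
    by apply: eq_bigr => i Hi; rewrite ffunE (negbTE Hi).
  rewrite -modnDml modnMml modnDml; congr (_ %% d)%N; ring.
set e := (m j0 + d.-1 * ms j0)%N.
have Lphi (t : outputs n d) : L (phi t) = ((L t + e) %% d)%N.
  rewrite /L -modnDml linphi modnDml -modnDmr -modnMmr linphi modnMmr modnDmr.
  rewrite modnDml; congr (_ %% d)%N; rewrite /e; ring.
have phi_inj : injective phi.
  move=> t1 t2 /ffunP H; apply/ffunP => j; have := H j; rewrite !ffunE.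
  case: eqP => [->|_] // [] E; apply: val_inj.
  have E' : (t1 j0 + 1 == t2 j0 + 1 %[mod d]) by rewrite E.
  by move: E'; rewrite eqn_modDr !modn_small // => /eqP.
pose G k : R := \sum_(t : outputs n d | L t == (k %% d)%N) 1.
have Gmod k : G k = G (k %% d)%N by rewrite /G modn_mod.
have Ginv k : G (k + e)%N = G k.
  rewrite /G (reindex_inj phi_inj) /=; apply: eq_bigl => t.
  by rewrite Lphi eqn_modDr /L modn_mod.
have nde : ~~ (d %| e)%N.
  apply/negP => /eqP He; move/negP: Hj0; apply; apply/eqP; apply: val_inj.
  have : (m j0 + d.-1 * ms j0 + ms j0 == ms j0 %[mod d]).
    by rewrite -modnDml He add0n.
  have -> : (m j0 + d.-1 * ms j0 + ms j0 = m j0 + d * ms j0)%N.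
    by rewrite -addnA (addnC _ (ms j0)) -mulSn prednK ?d_gt0.
  by rewrite -modnDmr modnMr addn0 !modn_small // => /eqP.
have Gc := @shift_const R d e G dP nde Gmod Ginv.
have Gsum : \sum_(k < d) G k = (d%:R) ^+ n.
  have -> : (d%:R ^+ n : R) = \sum_(t : outputs n d) 1.
    by rewrite sumr_const card_ffun !card_ord natrX.
  rewrite /G (exchange_big_dep xpredT) //=; apply: eq_bigr => t _.
  have ltl : (L t < d)%N by rewrite ltn_pmod // d_gt0.
  rewrite (big_pred1 (Ordinal ltl)) // => k /=.
  rewrite modn_small //; apply/eqP/eqP => [H|->] //.
  by apply: val_inj; rewrite /= H.
have G0 : G 0%N = (d%:R) ^+ n / d%:R.
  move: Gsum; under eq_bigr do rewrite Gc.
  rewrite sumr_const card_ord => <-.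
  by rewrite -(mulr_natr (G 0%N) d) mulfK // dR_neq0.
rewrite -G0 /G [RHS]big_mkcond /=; apply: eq_bigr => t _.
by rewrite key mod0n; case: (L t == 0%N).
Qed.

Lemma final (nBL : ~ bipartite_linear f) (n1 : (0 < n)%N) s (ms : outputs n d) :
  sum_mod ms = f s -> p s ms = ((d%:R : R) ^+ (n - 1))^-1.
Proof.
move=> Hms.
have [p0 p1] := pD.
pose tn (t : outputs n d) : 'I_n -> nat := fun j => t j.
pose S := \sum_(t : outputs n d) D (tn t) s (lin (tn t) ms).
pose dd : R := d%:R.
pose N1 : R := dd ^+ (n - 1).
have ddn : dd ^+ n = dd * N1 by rewrite /N1 -exprS subn1 prednK.
have SA : S = \sum_(m : outputs n d) p s m *
    \sum_(t : outputs n d) ((lin (tn t) m == lin (tn t) ms)%:R : R).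
  rewrite /S /D.
  under eq_bigr do rewrite linmod big_mkcond /=.
  rewrite exchange_big /=; apply: eq_bigr => m _.
  rewrite mulr_sumr; apply: eq_bigr => t _.
  by case: (lin (tn t) m == lin (tn t) ms); rewrite ?mulr1 ?mulr0.
have SB : S = p s ms * (dd * N1) + (1 - p s ms) * N1.
  rewrite SA (bigD1 ms) //=.
  have -> : \sum_(t : outputs n d) ((lin (tn t) ms == lin (tn t) ms)%:R : R) = dd * N1.
    under eq_bigr do rewrite eqxx.
    by rewrite sumr_const card_ffun !card_ord -ddn /dd natrX.
  congr (_ + _).
  have -> : 1 - p s ms = \sum_(m | m != ms) p s m.
    by rewrite -(p1 s) (bigD1 ms) //= addrC addrK.
  rewrite mulr_suml; apply: eq_bigr => m Hm.
  by rewrite count_N // -/dd ddn (mulrC dd N1) mulfK // dR_neq0.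
pose i00 : 'I_n := Ordinal n1.
have SC : S = dd * N1 / dd + dd * (1 - dd^-1).
  pose C (t : outputs n d) := [forall j, t j == t i00].
  have Sif : S = \sum_(t : outputs n d) (dd^-1 + (C t)%:R * (1 - dd^-1)).
    apply: eq_bigr => t _.
    case Ct : (C t); rewrite ?mul1r ?mul0r ?addr0.
      rewrite addrC subrK.
      have Htj j : tn t j = t i00 by rewrite /tn; move/forallP: Ct => /(_ j) /eqP ->.
      have -> : lin (tn t) ms = (t i00 * f s %% d)%N.
        rewrite /lin; under eq_bigr do rewrite Htj.
        by rewrite -big_distrr /= -modnMmr; move: Hms; rewrite /sum_mod => ->.
      by rewrite -Dmod (D_const _ Htj).
    have [j Hj] : exists j, t j != t i00.
      have : [exists j, t j != t i00] by rewrite -negb_forall; exact: (negbT Ct).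
      by case/existsP => j Hj; exists j.
    apply: (unif_val (all_unif (i0 := i00) (i1 := j) nBL _ s)).
    by rewrite /tn !modn_small //.
  have Nc : \sum_(t : outputs n d) ((C t)%:R : R) = dd.
    pose h (a : 'I_d) : outputs n d := [ffun=> a].
    transitivity (\sum_(t : outputs n d) \sum_(a : 'I_d) ((t == h a)%:R : R)).
      apply: eq_bigr => t _.
      case Ct : (C t).
        symmetry; rewrite (eq_bigr (fun a => ((a == t i00)%:R : R))) ?sum_indic // => a _.
        suff -> : (t == h a) = (a == t i00) by [].
        apply/eqP/eqP => [->|->]; first by rewrite ffunE.
        by apply/ffunP => j; rewrite ffunE; move/forallP: Ct => /(_ j) /eqP.
      rewrite big1 // => a _; case: eqP => // E.
      have : C (h a) by apply/forallP => j; rewrite !ffunE.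
      by rewrite -E Ct.
    rewrite exchange_big /=.
    under eq_bigr do rewrite (sum_indic (h _)).
    by rewrite sumr_const card_ord.
  rewrite Sif big_split /= sumr_const card_ffun !card_ord -mulr_suml Nc.
  by rewrite -mulr_natr natrX -/dd ddn mulrC.
have dd1 : dd - 1 != 0.
  rewrite subr_eq0 /dd pnatr_eq1; apply/eqP => E; by move: dP; rewrite E.
have ddnz : dd != 0 by exact: dR_neq0.
have N1nz : N1 != 0 by rewrite /N1 expf_neq0.
have E : (p s ms * N1 - 1) * (dd - 1) = 0.
  have E0 : p s ms * (dd * N1) + (1 - p s ms) * N1 = dd * N1 / dd + dd * (1 - dd^-1).
    by rewrite -SB -SC.
  rewrite (mulrC dd N1) mulfK // in E0.
  have Hx : dd * dd^-1 = 1 by rewrite mulfV.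
  move: E0 Hx; set x := dd^-1 => E0 Hx.
  have -> : (p s ms * N1 - 1) * (dd - 1) =
    (p s ms * (N1 * dd) + (1 - p s ms) * N1) - (N1 + dd * (1 - x)) - (dd * x - 1).
    by ring.
  by rewrite E0 subrr sub0r Hx subrr oppr0.
move/eqP: E; rewrite mulf_eq0 (negbTE dd1) orbF subr_eq0 => /eqP H.
by rewrite -/N1 -[p s ms]mulr1 -(mulfV N1nz) mulrA H mul1r.
Qed.
End Main.

Unset Implicit Arguments.
Set Strict Implicit.

Theorem theorem2p3p1 (R : realFieldType) (n d : nat) (c : 'I_n -> nat)
  (f : inputs c -> 'I_d) (p : inputs c -> outputs n d -> R) :
  (2 <= n)%N -> prime d -> ~ bipartite_linear f ->
  is_distribution p -> non_signalling p ->
  (forall s k, correlator p s k = (k == (f s : nat))%:R) ->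
  forall s m, p s m = if sum_mod m == (f s : nat)
                      then ((d%:R : R) ^+ (n - 1))^-1 else 0.
Proof.
move=> n2 dP nBL pD pNS pC s m.
case: eqP => Hm.
  exact: (final dP pD pNS pC nBL (ltnW n2) Hm).
by apply: (supp0 pD pC); apply/eqP.
Qed.
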